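(* Let $X$ be a Hausdorff Baire developable space which is collectionwise Hausdorff, or which is meta-Lindelöf. Then $dis(X)\geq\Delta(X)$.
   Context: All spaces are Hausdorff. $dis(X)$ denotes the least cardinal $\tau$ such that $X$ is the union of $\tau$ discrete subspaces. $\Delta(X)$ is the least cardinality of a non-empty open subset of $X$. A sequence $\{\mathcal{G}_n:n\in\omega\}$ of open covers of $X$ is a development if for every $x$ the sets $\bigcup\{G\in\mathcal{G}_n: x\in G\}$, $n\in\omega$, form a local base at $x$; $X$ is developable if it admits a development. *)

(* Defs.v *)
From Stdlib Require Import Classical.

Record topology (X : Type) : Type := Topology {
  open : (X -> Prop) -> Prop;
  open_full : open (fun _ => True);
  open_inter : forall U V, open U -> open V -> open (fun x => U x /\ V x);
  open_union : forall F : (X -> Prop) -> Prop,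
      (forall U, F U -> open U) -> open (fun x => exists U, F U /\ U x)
}.
Arguments open {X} t U.

Section Topo.
Context {X : Type} (T : topology X).

Definition closed (A : X -> Prop) : Prop := open T (fun x => ~ A x).

Definition hausdorff : Prop :=
  forall x y : X, x <> y -> exists U V, open T U /\ open T V /\ U x /\ V y /\
    (forall z, U z -> V z -> False).

Definition discrete_subspace (A : X -> Prop) : Prop :=
  forall x, A x -> exists U, open T U /\ U x /\ (forall y, A y -> U y -> y = x).

Definition dense (A : X -> Prop) : Prop :=
  forall U, open T U -> (exists x, U x) -> exists x, U x /\ A x.

Definition baire : Prop :=
  forall G : nat -> X -> Prop, (forall n, open T (G n)) -> (forall n, dense (G n)) ->
    dense (fun x => forall n, G n x).

Definition open_cover (F : (X -> Prop) -> Prop) : Prop :=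
  (forall U, F U -> open T U) /\ (forall x, exists U, F U /\ U x).

Definition star (x : X) (F : (X -> Prop) -> Prop) : X -> Prop :=
  fun y => exists U, F U /\ U x /\ U y.

Definition development (G : nat -> (X -> Prop) -> Prop) : Prop :=
  (forall n, open_cover (G n)) /\
  (forall x U, open T U -> U x -> exists n, forall y, star x (G n) y -> U y).

Definition developable : Prop := exists G, development G.

Definition collectionwise_hausdorff : Prop :=
  forall D : X -> Prop, closed D -> discrete_subspace D ->
    exists W : X -> X -> Prop,
      (forall d, D d -> open T (W d) /\ W d d) /\
      (forall d e z, D d -> D e -> d <> e -> W d z -> W e z -> False).

Definition countable (A : Type) : Prop := exists f : A -> nat, forall a b, f a = f b -> a = b.

Definition refines (V F : (X -> Prop) -> Prop) : Prop :=
  forall W, V W -> exists U, F U /\ (forall x, W x -> U x).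

Definition point_countable (V : (X -> Prop) -> Prop) : Prop :=
  forall x, countable {W : X -> Prop | V W /\ W x}.

Definition meta_lindelof : Prop :=
  forall F, open_cover F -> exists V, open_cover V /\ refines V F /\ point_countable V.

Definition card_le (A : X -> Prop) (I : Type) : Prop :=
  exists f : {x | A x} -> I, forall a b, f a = f b -> a = b.

(* dis(X) >= Delta(X): for every cover of X by discrete subspaces indexed by I
   (so |I| ranges over the cardinals whose minimum is dis(X)), some non-empty
   open set has cardinality <= |I| (i.e. Delta(X) <= |I|). *)
Definition dis_ge_Delta : Prop :=
  forall (I : Type) (D : I -> X -> Prop),
    (forall i, discrete_subspace (D i)) -> (forall x, exists i, D i x) ->
    exists U, open T U /\ (exists x, U x) /\ card_le U I.

End Topo.

(* Main.v *)
Require Import Defs.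
From Stdlib Require Import Classical ClassicalEpsilon FunctionalExtensionality PropExtensionality ProofIrrelevance Cantor.

Definition subs {P} (C D : P -> Prop) := forall x, C x -> D x.

Lemma subs_eq {P} (C D : P -> Prop) : subs C D -> subs D C -> C = D.
Proof.
  intros h1 h2. apply functional_extensionality; intro x.
  apply propositional_extensionality; split; auto.
Qed.

Section Tower.
Variable P : Type.
Variable f : (P -> Prop) -> (P -> Prop).
Hypothesis finf : forall C, subs C (f C).

Inductive tower : (P -> Prop) -> Prop :=
| tw_f : forall C, tower C -> tower (f C)
| tw_u : forall F : (P -> Prop) -> Prop, (forall C, F C -> tower C) ->
    tower (fun x => exists C, F C /\ C x).

Definition extreme C := forall D, tower D -> subs D C -> ~ subs C D -> subs (f D) C.

Lemma lemA C : extreme C -> forall D, tower D -> subs D C \/ subs (f C) D.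
Proof.
  intros hC D hD. induction hD as [D' hD' IH | F hF IH].
  - destruct IH as [h|h].
    + destruct (classic (subs C D')) as [h2|h2].
      * right. rewrite (subs_eq _ _ h2 h). apply subs_eq in h; auto. intros x hx; exact hx.
      * left. apply hC; auto.
    + right. intros x hx. apply finf, h, hx.
  - destruct (classic (forall C', F C' -> subs C' C)) as [h|h].
    + left. intros x [C' [h1 h2]]. exact (h C' h1 x h2).
    + right. apply not_all_ex_not in h. destruct h as [C' h].
      destruct (classic (F C')) as [hF'|hF']. 2:{ exfalso; apply h; intro; contradiction. }
      destruct (IH C' hF') as [h3|h3]. { exfalso; apply h; intros; auto. }
      intros x hx. exists C'. split; auto.
Qed.

Lemma lemB C : tower C -> extreme C.
Proof.
  intro hC. induction hC as [C' hC' IH | F hF IH].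
  - intros D hD h1 h2.
    destruct (lemA C' IH D hD) as [h|h]; [|contradiction].
    destruct (classic (subs C' D)) as [h3|h3].
    + rewrite (subs_eq _ _ h h3). intros x hx; exact hx.
    + intros x hx. apply finf. exact (IH D hD h h3 x hx).
  - intros D hD h1 h2.
    destruct (classic (exists C', F C' /\ ~ subs C' D)) as [[C' [hF' h3]]|h].
    + destruct (lemA C' (IH C' hF') D hD) as [h4|h4].
      * intros x hx. exists C'. split; auto. exact (IH C' hF' D hD h4 h3 x hx).
      * exfalso. apply h3. intros x hx. apply h4, finf, hx.
    + exfalso. apply h2. intros x [C' [hF' hx]].
      apply NNPP; intro hn. apply h. exists C'. split; auto.
Qed.

Lemma tower_comp C D : tower C -> tower D -> subs C D \/ subs D C.
Proof.
  intros hC hD. destruct (lemA C (lemB C hC) D hD) as [h|h]; auto.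
  left. intros x hx. apply h, finf, hx.
Qed.

Lemma tower_top : tower (fun x => exists C, tower C /\ C x).
Proof. apply tw_u. auto. Qed.

End Tower.

Section Zorn.
Variable P : Type.
Variable le : P -> P -> Prop.
Hypothesis le_refl : forall x, le x x.
Hypothesis le_trans : forall x y z, le x y -> le y z -> le x z.
Definition chainP (C : P -> Prop) := forall a b, C a -> C b -> le a b \/ le b a.
Hypothesis ub : forall C, chainP C -> exists u, forall c, C c -> le c u.

Theorem zorn : exists m, forall x, le m x -> le x m.
Proof.
  apply NNPP; intro Hn.
  assert (H : forall m, exists x, le m x /\ ~ le x m).
  { intro m. apply NNPP; intro h. apply Hn. exists m. intros x hx.
    apply NNPP; intro hx'. apply h. exists x; auto. }
  assert (Hg : forall C, exists v, chainP C -> forall c, C c -> le c v /\ ~ le v c).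
  { intro C. destruct (classic (chainP C)) as [hc|hc].
    - destruct (ub C hc) as [u hu]. destruct (H u) as [x [h1 h2]].
      exists x. intros _ c hcc. split. eapply le_trans; eauto.
      intro h3. apply h2. eapply le_trans; eauto.
    - destruct (ub (fun _ => False)) as [u _]. intros a b ha; contradiction.
      exists u. intro; contradiction. }
  set (g := fun C => proj1_sig (constructive_indefinite_description _ (Hg C))).
  assert (gspec : forall C, chainP C -> forall c, C c -> le c (g C) /\ ~ le (g C) c).
  { intro C. exact (proj2_sig (constructive_indefinite_description _ (Hg C))). }
  set (f := fun C : P -> Prop => fun x => C x \/ x = g C).
  assert (finf : forall C, subs C (f C)). { intros C x hx. left; exact hx. }
  assert (hch : forall C, tower P f C -> chainP C).
  { intros C hC. induction hC as [C' hC' IH | F hF IH].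
    - intros a b [ha|ha] [hb|hb]; subst.
      + auto.
      + left. apply (gspec C' IH a ha).
      + right. apply (gspec C' IH b hb).
      + left; apply le_refl.
    - intros a b [C1 [h1 ha]] [C2 [h2 hb]].
      destruct (tower_comp P f finf C1 C2 (hF C1 h1) (hF C2 h2)) as [h|h].
      + apply (IH C2 h2); auto.
      + apply (IH C1 h1); auto. }
  set (T := fun x => exists C, tower P f C /\ C x).
  assert (hT : tower P f T) by apply tower_top.
  assert (hgT : T (g T)). { exists (f T). split. apply tw_f; auto. right; reflexivity. }
  destruct (gspec T (hch T hT) (g T) hgT) as [_ h]. apply h, le_refl.
Qed.
End Zorn.

Definition injf {A B} (f : A -> B) := forall a b, f a = f b -> a = b.
Definition lec (A B : Type) := exists f : A -> B, injf f.

Definition pinj {A B} (R : A -> B -> Prop) :=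
  (forall a b b', R a b -> R a b' -> b = b') /\ (forall a a' b, R a b -> R a' b -> a = a').

Lemma choose_fun {A B} (R : A -> B -> Prop) : (forall a, exists b, R a b) -> exists f : A -> B, forall a, R a (f a).
Proof.
  intro H. exists (fun a => proj1_sig (constructive_indefinite_description _ (H a))).
  intro a. exact (proj2_sig (constructive_indefinite_description _ (H a))).
Qed.

Theorem card_comp (A B : Type) : lec A B \/ lec B A.
Proof.
  set (P := {R : A -> B -> Prop | pinj R}).
  set (le := fun p q : P => forall a b, proj1_sig p a b -> proj1_sig q a b).
  destruct (zorn P le) as [[R [hf hi]] hm].
  - intros x a b h; exact h.
  - intros x y z h1 h2 a b h; auto.
  - intros C hC.
    assert (hp : pinj (fun a b => exists p, C p /\ proj1_sig p a b)).
    { split.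
      - intros a b b' [p [hp h1]] [q [hq h2]].
        destruct (hC p q hp hq) as [h|h].
        + exact (proj1 (proj2_sig q) a b b' (h a b h1) h2).
        + exact (proj1 (proj2_sig p) a b b' h1 (h a b' h2)).
      - intros a a' b [p [hp h1]] [q [hq h2]].
        destruct (hC p q hp hq) as [h|h].
        + exact (proj2 (proj2_sig q) a a' b (h a b h1) h2).
        + exact (proj2 (proj2_sig p) a a' b h1 (h a' b h2)). }
    exists (exist _ _ hp). intros c hc a b h. simpl. exists c; auto.
  - simpl in hm.
    destruct (classic (forall a, exists b, R a b)) as [h|h].
    + left. destruct (choose_fun R h) as [f hfR]. exists f. intros a a' e.
      apply (hi a a' (f a)); auto. rewrite e; auto.
    + destruct (classic (forall b, exists a, R a b)) as [h'|h'].
      * right. destruct (choose_fun (fun b a => R a b) h') as [f hfR]. exists f. intros b b' e.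
        apply (hf (f b) b b'); auto. rewrite e; auto.
      * exfalso. apply not_all_ex_not in h. destruct h as [a0 ha0].
        apply not_all_ex_not in h'. destruct h' as [b0 hb0].
        set (R' := fun a b => R a b \/ (a = a0 /\ b = b0)).
        assert (hp : pinj R').
        { split.
          - intros a b b' [h1|[e1 e2]] [h2|[e3 e4]]; subst.
            + eauto.
            + exfalso; apply ha0; eauto.
            + exfalso; apply ha0; eauto.
            + reflexivity.
          - intros a a' b [h1|[e1 e2]] [h2|[e3 e4]]; subst.
            + eauto.
            + exfalso; apply hb0; eauto.
            + exfalso; apply hb0; eauto.
            + reflexivity. }
        assert (h1 := hm (exist _ R' hp)). simpl in h1.
        assert (h2 : R a0 b0). { apply h1. intros a b h; left; exact h. right; auto. }
        apply ha0; eauto.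
Qed.

Lemma sub_fun {A} (P Q : A -> Prop) : lec {a | P a} {a | Q a} ->
  exists h : A -> A, (forall u, P u -> Q (h u)) /\ (forall u v, P u -> P v -> h u = h v -> u = v).
Proof.
  intros [f hf].
  exists (fun u => match excluded_middle_informative (P u) with
                   | left hu => proj1_sig (f (exist _ u hu)) | right _ => u end).
  split.
  - intros u hu. destruct (excluded_middle_informative (P u)) as [h|h]; [|contradiction].
    exact (proj2_sig (f (exist _ u h))).
  - intros u v hu hv e.
    destruct (excluded_middle_informative (P u)) as [h1|h1]; [|contradiction].
    destruct (excluded_middle_informative (P v)) as [h2|h2]; [|contradiction].
    apply eq_sig_hprop in e; [|intros; apply proof_irrelevance]. apply hf in e. apply eq_sig_fst in e. exact e.
Qed.

Section Hess.
Variable A : Type.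
Variable e : nat -> A.
Hypothesis einj : forall n m, e n = e m -> n = m.

Definition pr (n m : nat) := to_nat (n, m).
Lemma pr_inj n m n' m' : pr n m = pr n' m' -> n = n' /\ m = m'.
Proof.
  intro h. assert (h2 := f_equal of_nat h). unfold pr in h2.
  rewrite !cancel_of_to in h2. inversion h2; auto.
Qed.

Record good (S : A -> Prop) (R : A * A -> A -> Prop) : Prop := {
  g1 : forall x y c, R (x, y) c -> S x /\ S y /\ S c;
  g2 : forall x y, S x -> S y -> exists c, R (x, y) c;
  g3 : forall p c c', R p c -> R p c' -> c = c';
  g4 : forall p p' c, R p c -> R p' c -> p = p';
  g5 : forall n, S (e n);
  g6 : forall n m, R (e n, e m) (e (pr n m)) }.

Definition PP := {p : (A -> Prop) * (A * A -> A -> Prop) | good (fst p) (snd p)}.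
Definition lePP (p q : PP) :=
  (forall a, fst (proj1_sig p) a -> fst (proj1_sig q) a) /\
  (forall z c, snd (proj1_sig p) z c -> snd (proj1_sig q) z c).

Lemma base_good : good (fun a => exists n, a = e n)
  (fun p c => exists n m, p = (e n, e m) /\ c = e (pr n m)).
Proof.
  split.
  - intros x y c [n [m [h1 h2]]]. inversion h1; subst. repeat split; eauto.
  - intros x y [n hn] [m hm]. subst. exists (e (pr n m)). eauto.
  - intros p c c' [n [m [h1 h2]]] [n' [m' [h1' h2']]]. subst. inversion h1'.
    apply einj in H0. apply einj in H1. subst. reflexivity.
  - intros p p' c [n [m [h1 h2]]] [n' [m' [h1' h2']]]. subst.
    apply einj in h2'. apply pr_inj in h2'. destruct h2'; subst; reflexivity.
  - intro n; eauto.
  - intros n m; eauto.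
Qed.

Lemma max_exists : exists m : PP, forall x, lePP m x -> lePP x m.
Proof.
  apply zorn.
  - intro x; split; auto.
  - intros x y z [h1 h2] [h3 h4]; split; auto.
  - intros C hC. destruct (classic (exists q, C q)) as [[q0 hq0]|hne].
    + set (S := fun a => exists q, C q /\ fst (proj1_sig q) a).
      set (R := fun z c => exists q, C q /\ snd (proj1_sig q) z c).
      assert (hg : good S R).
      { split.
        - intros x y c [q [hq h]]. destruct (g1 _ _ (proj2_sig q) x y c h) as [a1 [a2 a3]].
          repeat split; exists q; auto.
        - intros x y [q1 [hq1 h1]] [q2 [hq2 h2]].
          destruct (hC q1 q2 hq1 hq2) as [[l1 l2]|[l1 l2]].
          + destruct (g2 _ _ (proj2_sig q2) x y (l1 x h1) h2) as [c hc]. exists c, q2; auto.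
          + destruct (g2 _ _ (proj2_sig q1) x y h1 (l1 y h2)) as [c hc]. exists c, q1; auto.
        - intros p c c' [q1 [hq1 h1]] [q2 [hq2 h2]].
          destruct (hC q1 q2 hq1 hq2) as [[l1 l2]|[l1 l2]].
          + exact (g3 _ _ (proj2_sig q2) p c c' (l2 _ _ h1) h2).
          + exact (g3 _ _ (proj2_sig q1) p c c' h1 (l2 _ _ h2)).
        - intros p p' c [q1 [hq1 h1]] [q2 [hq2 h2]].
          destruct (hC q1 q2 hq1 hq2) as [[l1 l2]|[l1 l2]].
          + exact (g4 _ _ (proj2_sig q2) p p' c (l2 _ _ h1) h2).
          + exact (g4 _ _ (proj2_sig q1) p p' c h1 (l2 _ _ h2)).
        - intro n. exists q0. split; auto. apply (g5 _ _ (proj2_sig q0)).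
        - intros n m. exists q0. split; auto. apply (g6 _ _ (proj2_sig q0)). }
      exists (exist _ (S, R) hg). intros c hc. split; simpl.
      * intros a ha; exists c; auto.
      * intros z x hz; exists c; auto.
    + exists (exist (fun p => good (fst p) (snd p)) (_, _) base_good).
      intros c hc. exfalso; apply hne; eauto.
Qed.

Theorem hessenberg : lec (A * A) A.
Proof.
  destruct max_exists as [[[S R] hg] hm]. simpl in hg.
  assert (hr : forall x y, exists c, S x -> S y -> R (x, y) c).
  { intros x y. destruct (classic (S x /\ S y)) as [[h1 h2]|h].
    - destruct (g2 _ _ hg x y h1 h2) as [c hc]. exists c; auto.
    - exists x. intros h1 h2; exfalso; auto. }
  set (r := fun x y => proj1_sig (constructive_indefinite_description _ (hr x y))).
  assert (rR : forall x y, S x -> S y -> R (x, y) (r x y)).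
  { intros x y. exact (proj2_sig (constructive_indefinite_description _ (hr x y))). }
  assert (rS : forall x y, S x -> S y -> S (r x y)).
  { intros x y h1 h2. apply (g1 _ _ hg x y), rR; auto. }
  assert (rinj : forall x y x' y', S x -> S y -> S x' -> S y' -> r x y = r x' y' -> x = x' /\ y = y').
  { intros x y x' y' h1 h2 h3 h4 h5. assert (h0 := rR x y h1 h2). rewrite h5 in h0.
    assert (h := g4 _ _ hg (x, y) (x', y') _ h0 (rR x' y' h3 h4)). inversion h; auto. }
  assert (e01 : e 0 <> e 1). { intro h; apply einj in h; discriminate. }
  destruct (card_comp {a | ~ S a} {a | S a}) as [hcc|hcc].
  - destruct (sub_fun _ _ hcc) as [k [hk1 hk2]].
    set (phi := fun a => match excluded_middle_informative (S a) with
                         | left _ => r a (e 0) | right _ => r (k a) (e 1) end).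
    assert (phiS : forall a, S (phi a)).
    { intro a. unfold phi. destruct (excluded_middle_informative (S a)) as [h|h].
      - apply rS; auto. apply (g5 _ _ hg).
      - apply rS; auto. apply (g5 _ _ hg). }
    assert (phiI : forall a b, phi a = phi b -> a = b).
    { intros a b. unfold phi.
      assert (s0 := g5 _ _ hg 0). assert (s1 := g5 _ _ hg 1).
      destruct (excluded_middle_informative (S a)) as [ha|ha];
      destruct (excluded_middle_informative (S b)) as [hb|hb]; intro h.
      - apply rinj in h; tauto.
      - apply rinj in h; auto; tauto.
      - apply rinj in h; auto; destruct h; congruence.
      - apply rinj in h; auto. destruct h as [h _]. apply hk2; auto. }
    exists (fun p => r (phi (fst p)) (phi (snd p))).
    intros [a b] [a' b'] h. simpl in h. apply rinj in h; auto.
    destruct h as [h1 h2]. apply phiI in h1. apply phiI in h2. subst; reflexivity.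
  - exfalso.
    destruct (sub_fun _ _ hcc) as [h [hh1 hh2]].
    set (T := fun a => exists u, S u /\ a = h u).
    set (code := fun x y (k : nat) u v => S u /\ S v /\
       ((S x /\ u = x /\ y = h v /\ k = 0) \/ (x = h u /\ S y /\ v = y /\ k = 1) \/
        (x = h u /\ y = h v /\ k = 2))).
    assert (code_uniq : forall x y k u v k' u' v', code x y k u v -> code x y k' u' v' ->
              k = k' /\ u = u' /\ v = v').
    { intros x y k u v k' u' v' [a1 [a2 c1]] [b1 [b2 c2]].
      destruct c1 as [[c3 [c4 [c5 c6]]]|[[c3 [c4 [c5 c6]]]|[c3 [c4 c5]]]];
      destruct c2 as [[d3 [d4 [d5 d6]]]|[[d3 [d4 [d5 d6]]]|[d3 [d4 d5]]]]; subst;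
      try (exfalso; eapply hh1; [|eassumption]; assumption);
      repeat split; try reflexivity; try (apply hh2; auto). }
    assert (code_det : forall x y x' y' k u v, code x y k u v -> code x' y' k u v -> x = x' /\ y = y').
    { intros x y x' y' k u v [a1 [a2 c1]] [b1 [b2 c2]].
      destruct c1 as [[c3 [c4 [c5 c6]]]|[[c3 [c4 [c5 c6]]]|[c3 [c4 c5]]]];
      destruct c2 as [[d3 [d4 [d5 d6]]]|[[d3 [d4 [d5 d6]]]|[d3 [d4 d5]]]]; subst;
      try discriminate; auto. }
    set (S' := fun a => S a \/ T a).
    set (R' := fun (p : A * A) c => R p c \/
         exists k u v, code (fst p) (snd p) k u v /\ c = h (r (e k) (r u v))).
    assert (hg' : good S' R').
    { split.
      - intros x y c [hR|[k [u [v [hcode hc]]]]].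
        + destruct (g1 _ _ hg x y c hR) as [a1 [a2 a3]]. unfold S'; tauto.
        + simpl in hcode. destruct hcode as [a1 [a2 c1]].
          assert (hcT : T c). { exists (r (e k) (r u v)). split; auto. apply rS; auto. apply (g5 _ _ hg). }
          destruct c1 as [[c3 [c4 [c5 c6]]]|[[c3 [c4 [c5 c6]]]|[c3 [c4 c5]]]]; subst;
          unfold S', T; repeat split; eauto.
      - intros x y [hx|[u [hu ex]]] [hy|[v [hv ey]]].
        + destruct (g2 _ _ hg x y hx hy) as [c hc]. exists c; left; auto.
        + eexists; right. exists 0, x, v. split; [|reflexivity]. simpl. unfold code; tauto.
        + eexists; right. exists 1, u, y. split; [|reflexivity]. simpl. unfold code; tauto.
        + eexists; right. exists 2, u, v. split; [|reflexivity]. simpl. unfold code; tauto.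
      - intros [x y] c c' [h1|[k [u [v [hcode hc]]]]] [h2|[k' [u' [v' [hcode' hc']]]]].
        + exact (g3 _ _ hg _ c c' h1 h2).
        + exfalso. destruct (g1 _ _ hg x y c h1) as [a1 [a2 _]].
          destruct hcode' as [b1 [b2 [[_ [_ [d _]]]|[[d _]|[d _]]]]]; simpl in d; subst; match goal with H: S (h ?u) |- _ => exact (hh1 u ltac:(assumption) H) end.
        + exfalso. destruct (g1 _ _ hg x y c' h2) as [a1 [a2 _]].
          destruct hcode as [b1 [b2 [[_ [_ [d _]]]|[[d _]|[d _]]]]]; simpl in d; subst; match goal with H: S (h ?u) |- _ => exact (hh1 u ltac:(assumption) H) end.
        + simpl in *. destruct (code_uniq _ _ _ _ _ _ _ _ hcode hcode') as [q1 [q2 q3]].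
          subst; reflexivity.
      - intros [x y] [x' y'] c [h1|[k [u [v [hcode hc]]]]] [h2|[k' [u' [v' [hcode' hc']]]]].
        + exact (g4 _ _ hg _ _ c h1 h2).
        + exfalso. destruct (g1 _ _ hg x y c h1) as [_ [_ a3]].
          destruct hcode' as [b1 [b2 _]]. subst. eapply hh1; [|exact a3].
          apply rS; auto. apply (g5 _ _ hg).
        + exfalso. destruct (g1 _ _ hg x' y' c h2) as [_ [_ a3]].
          destruct hcode as [b1 [b2 _]]. subst. eapply hh1; [|exact a3].
          apply rS; auto. apply (g5 _ _ hg).
        + simpl in *.
          assert (hs1 : S u /\ S v) by (destruct hcode; tauto).
          assert (hs2 : S u' /\ S v') by (destruct hcode'; tauto).
          destruct hs1 as [su sv]. destruct hs2 as [su' sv'].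
          assert (ge := g5 _ _ hg).
          subst c. apply hh2 in hc'; try (apply rS; auto).
          apply rinj in hc'; auto. destruct hc' as [q1 q2]. apply einj in q1.
          apply rinj in q2; auto. destruct q2; subst.
          destruct (code_det _ _ _ _ _ _ _ hcode hcode'). subst; reflexivity.
      - intro n. left. apply (g5 _ _ hg).
      - intros n m. left. apply (g6 _ _ hg). }
    destruct (hm (exist _ (S', R') hg')) as [hl _].
    + split; simpl. intros a ha; left; exact ha. intros z c hz; left; exact hz.
    + simpl in hl. assert (hT : S (h (e 0))).
      { apply hl. right. exists (e 0). split; auto. apply (g5 _ _ hg). }
      eapply hh1; [|exact hT]. apply (g5 _ _ hg).
Qed.
End Hess.


Section Top.
Variable X : Type.
Variable T : topology X.

Lemma open_char (A : X -> Prop) :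
  (forall x, A x -> exists U, open T U /\ U x /\ forall y, U y -> A y) -> open T A.
Proof.
  intro H.
  assert (E : A = (fun x => exists U, (open T U /\ forall y, U y -> A y) /\ U x)).
  { apply functional_extensionality; intro x. apply propositional_extensionality; split.
    - intro hx. destruct (H x hx) as [U [h1 [h2 h3]]]. exists U; auto.
    - intros [U [[_ h] hU]]. auto. }
  rewrite E. apply open_union. intros U [h _]; exact h.
Qed.

Lemma compl_point_open (q : X) : hausdorff T -> open T (fun x => x <> q).
Proof.
  intro hH. apply open_char. intros x hx.
  destruct (hH x q hx) as [U [V [h1 [h2 [h3 [h4 h5]]]]]].
  exists U. repeat split; auto. intros y hy e; subst. eauto.
Qed.

Lemma isolated_point (B : X -> Prop) (c : {x | B x} -> nat) :
  hausdorff T -> baire T -> open T B -> (exists x, B x) ->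
  (forall a b, c a = c b -> a = b) -> exists p, open T (fun x => x = p).
Proof.
  intros hH hB hO [x0 hx0] hc. apply NNPP; intro hn.
  set (Pn := fun n x => exists b : {x | B x}, c b = n /\ proj1_sig b = x).
  assert (Pu : forall n x y, Pn n x -> Pn n y -> x = y).
  { intros n x y [b [h1 h2]] [b' [h1' h2']]. rewrite <- h2, <- h2'. rewrite <- h1' in h1.
    apply hc in h1. rewrite h1; reflexivity. }
  assert (Go : forall n, open T (fun x => ~ Pn n x)).
  { intro n. apply open_char. intros x hx.
    destruct (classic (exists q, Pn n q)) as [[q hq]|hq].
    - exists (fun z => z <> q). split. apply compl_point_open; auto.
      split. intro e; subst; auto. intros y hy hy'. apply hy. eapply Pu; eauto.
    - exists (fun _ => True). split. apply open_full. split; auto.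
      intros y _ hy. apply hq; eauto. }
  assert (Gd : forall n, dense T (fun x => ~ Pn n x)).
  { intros n U hU [y hy]. apply NNPP; intro h.
    assert (hall : forall x, U x -> Pn n x).
    { intros x hx. apply NNPP; intro h2. apply h. exists x; auto. }
    apply hn. exists y.
    assert (E : U = (fun x => x = y)).
    { apply functional_extensionality; intro x. apply propositional_extensionality; split.
      - intro hx. eapply Pu; eauto.
      - intro e; subst; auto. }
    rewrite <- E; auto. }
  destruct (hB _ Go Gd B hO (ex_intro _ x0 hx0)) as [x [hx hall]].
  apply (hall (c (exist _ x hx))). exists (exist _ x hx). auto.
Qed.


Definition sep_prop (Dc : X -> Prop) := exists (Wf : X -> X -> Prop) (code : X -> X -> nat),
  (forall x, Dc x -> open T (Wf x) /\ Wf x x) /\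
  (forall x x' s, Dc x -> Dc x' -> Wf x s -> Wf x' s -> code s x = code s x' -> x = x').

Lemma sep_cwh Dc : collectionwise_hausdorff T -> closed T Dc -> discrete_subspace T Dc -> sep_prop Dc.
Proof.
  intros hC hc hd. destruct (hC Dc hc hd) as [W [h1 h2]].
  exists W, (fun _ _ => 0). split; auto.
  intros x x' s hx hx' hs hs' _. apply NNPP; intro hne. eapply h2; eauto.
Qed.

Lemma sep_ml Dc : meta_lindelof T -> closed T Dc -> discrete_subspace T Dc -> sep_prop Dc.
Proof.
  intros hM hc hd.
  set (F := fun U : X -> Prop => U = (fun z => ~ Dc z) \/
             (open T U /\ forall y y', Dc y -> U y -> Dc y' -> U y' -> y = y')).
  assert (hF : open_cover T F).
  { split.
    - intros U [e|[h _]]; [subst; exact hc | exact h].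
    - intro x. destruct (classic (Dc x)) as [hx|hx].
      + destruct (hd x hx) as [U [h1 [h2 h3]]]. exists U. split; auto.
        right. split; auto. intros y y' a1 a2 a3 a4. rewrite (h3 y a1 a2), (h3 y' a3 a4); reflexivity.
      + exists (fun z => ~ Dc z). split; auto. left; reflexivity. }
  destruct (hM F hF) as [V [[hVo hVc] [hVr hVp]]].
  destruct (choose_fun (fun x W => V W /\ W x) hVc) as [Wx hWx].
  assert (hone : forall x, Dc x -> forall y, Dc y -> Wx x y -> y = x).
  { intros x hx y hy hxy. destruct (hWx x) as [h1 h2].
    destruct (hVr _ h1) as [U [hU hsub]].
    destruct hU as [e|[_ hU]].
    - subst U. exfalso. exact (hsub x h2 hx).
    - apply (hU y x hy (hsub y hxy) hx (hsub x h2)). }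
  set (cnt := fun s => proj1_sig (constructive_indefinite_description _ (hVp s))).
  assert (hcnt : forall s a b, cnt s a = cnt s b -> a = b).
  { intro s. exact (proj2_sig (constructive_indefinite_description _ (hVp s))). }
  exists Wx.
  exists (fun s x => match excluded_middle_informative (V (Wx x) /\ Wx x s) with
                     | left h => cnt s (exist _ (Wx x) h) | right _ => 0 end).
  split.
  - intros x hx. split. apply hVo, (hWx x). apply (hWx x).
  - intros x x' s hx hx' hs hs'.
    destruct (excluded_middle_informative (V (Wx x) /\ Wx x s)) as [h1|h1];
      [| exfalso; apply h1; split; auto; apply (hWx x)].
    destruct (excluded_middle_informative (V (Wx x') /\ Wx x' s)) as [h2|h2];
      [| exfalso; apply h2; split; auto; apply (hWx x')].
    intro e. apply hcnt in e. apply (f_equal (@proj1_sig _ _)) in e. simpl in e.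
    symmetry. apply (hone x hx x' hx'). rewrite e. apply (hWx x').
Qed.

End Top.

Section Main.
Variable X : Type.
Variable T : topology X.
Variable x0 : X.
Hypothesis hH : hausdorff T.
Hypothesis hB : baire T.
Variable G : nat -> (X -> Prop) -> Prop.
Hypothesis hG : development T G.
Hypothesis hS : forall Dc, closed T Dc -> discrete_subspace T Dc -> sep_prop X T Dc.
Variable I : Type.
Variable D : I -> X -> Prop.
Hypothesis hD : forall i, discrete_subspace T (D i).
Hypothesis hcov : forall x, exists i, D i x.

Definition Dn i n x := D i x /\ forall y, D i y -> star x (G n) y -> y = x.

Lemma F1 x : exists i n, Dn i n x.
Proof.
  destruct (hcov x) as [i hi]. destruct (hD i x hi) as [U [h1 [h2 h3]]].
  destruct (proj2 hG x U h1 h2) as [n hn]. exists i, n. split; auto.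
Qed.

Lemma F2 n W i a b : G n W -> W a -> W b -> Dn i n a -> Dn i n b -> a = b.
Proof.
  intros hW ha hb [_ h] [hb' _]. symmetry. apply h; auto. exists W; auto.
Qed.

Lemma F3 i n : closed T (Dn i n).
Proof.
  unfold closed. apply open_char. intros x hx.
  destruct (proj2 (proj1 hG n) x) as [W [hW hWx]].
  destruct (classic (exists d, Dn i n d /\ W d)) as [[d [hd hdW]]|hno].
  - assert (hne : x <> d). { intro e; subst; auto. }
    destruct (hH x d hne) as [U [V [h1 [h2 [h3 [h4 h5]]]]]].
    exists (fun z => W z /\ U z). split. apply open_inter; auto. apply (proj1 (proj1 hG n)); auto.
    split; auto. intros y [hy1 hy2] hy.
    assert (y = d) by (eapply F2; eauto). subst. eauto.
  - exists W. split. apply (proj1 (proj1 hG n)); auto. split; auto.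
    intros y hy hy'. apply hno; eauto.
Qed.

Lemma F4 i n : discrete_subspace T (Dn i n).
Proof.
  intros x hx. destruct (proj2 (proj1 hG n) x) as [W [hW hWx]].
  exists W. split. apply (proj1 (proj1 hG n)); auto. split; auto.
  intros y hy hyW. eapply F2; eauto.
Qed.

Definition En n y := exists i, Dn i n y.

Lemma find_B : exists B, open T B /\ (exists x, B x) /\ exists n W, G n W /\ (forall x, B x -> W x) /\
  (forall U z, open T U -> U z -> B z -> exists s, U s /\ B s /\ En n s).
Proof.
  set (O := fun n x => exists U, open T U /\ U x /\ forall y, U y -> ~ En n y).
  assert (hO : forall n, open T (O n)).
  { intro n. apply open_char. intros x [U [h1 [h2 h3]]]. exists U. repeat split; auto.
    intros y hy. exists U; auto. }
  destruct (classic (forall n, dense T (O n))) as [hd|hd].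
  - exfalso. destruct (hB O hO hd (fun _ => True) (open_full _ T) (ex_intro _ x0 Logic.I)) as [x [_ hx]].
    destruct (F1 x) as [i [n hn]]. destruct (hx n) as [U [_ [hU h]]]. apply (h x hU). exists i; auto.
  - apply not_all_ex_not in hd. destruct hd as [n hn]. unfold dense in hn.
    apply not_all_ex_not in hn. destruct hn as [V hn].
    apply imply_to_and in hn. destruct hn as [hV hn].
    apply imply_to_and in hn. destruct hn as [[y hy] hn].
    destruct (proj2 (proj1 hG n) y) as [W [hW hWy]].
    exists (fun x => V x /\ W x). split. apply open_inter; auto. apply (proj1 (proj1 hG n)); auto.
    split. exists y; auto.
    exists n, W. split; auto. split. intros x [_ h]; exact h.
    intros U z hU hz hBz.
    apply NNPP; intro hno. apply hn. exists z. split. apply hBz.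
    exists (fun x => U x /\ (V x /\ W x)). split.
    { apply open_inter; auto. apply open_inter; auto. apply (proj1 (proj1 hG n)); auto. }
    split; auto. intros s [h1 h2] h3. apply hno. exists s; auto.
Qed.

Definition J := ((I * nat) * I * nat)%type.

Lemma main_inj : exists B, open T B /\ (exists x, B x) /\ lec {x | B x} J.
Proof.
  destruct find_B as [B [hBo [hBne [n [W [hW [hBW hdens]]]]]]].
  exists B. split; auto. split; auto.
  assert (hidx : forall s, exists i, En n s -> Dn i n s).
  { intro s. destruct (classic (En n s)) as [[i h]|h].
    - exists i; auto.
    - destruct (hcov x0) as [i _]. exists i; intro; contradiction. }
  destruct (choose_fun _ hidx) as [idx hidxs].
  assert (hSinj : forall s s', B s -> B s' -> En n s -> En n s' -> idx s = idx s' -> s = s').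
  { intros s s' h1 h2 h3 h4 e. apply (F2 n W (idx s) s s'); auto.
    rewrite e; auto. }
  assert (him : forall x, exists p : I * nat, Dn (fst p) (snd p) x).
  { intro x. destruct (F1 x) as [i [m h]]. exists (i, m); auto. }
  destruct (choose_fun _ him) as [im him'].
  assert (hsep : forall p : I * nat, exists wc : (X -> X -> Prop) * (X -> X -> nat),
     (forall x, Dn (fst p) (snd p) x -> open T (fst wc x) /\ fst wc x x) /\
     (forall x x' s, Dn (fst p) (snd p) x -> Dn (fst p) (snd p) x' -> fst wc x s -> fst wc x' s ->
        snd wc s x = snd wc s x' -> x = x')).
  { intros [i m]. destruct (hS (Dn i m) (F3 i m) (F4 i m)) as [Wf [code [h1 h2]]].
    exists (Wf, code). split; auto. }
  destruct (choose_fun _ hsep) as [wc hwc].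
  assert (hsx : forall x, exists s, B x -> fst (wc (im x)) x s /\ B s /\ En n s).
  { intro x. destruct (classic (B x)) as [hx|hx].
    - destruct (proj1 (hwc (im x)) x (him' x)) as [h1 h2].
      destruct (hdens _ x h1 h2 hx) as [s hs]. exists s; auto.
    - exists x; intro; contradiction. }
  destruct (choose_fun _ hsx) as [sx hsxs].
  exists (fun b => let x := proj1_sig b in
            (im x, idx (sx x), snd (wc (im x)) (sx x) x)).
  intros [x hx] [x' hx'] e. simpl in e. inversion e as [[e1 e2 e3]].
  destruct (hsxs x hx) as [a1 [a2 a3]]. destruct (hsxs x' hx') as [b1 [b2 b3]].
  assert (es : sx x = sx x') by (apply hSinj; auto).
  assert (exx : x = x').
  { apply (proj2 (hwc (im x)) x x' (sx x) (him' x)).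
    - rewrite e1. apply him'.
    - exact a1.
    - rewrite e1, es. exact b1.
    - rewrite <- es in e3. rewrite e3. rewrite e1. reflexivity. }
  subst x'. f_equal. apply proof_irrelevance.
Qed.

End Main.

Lemma lec_trans A B C : lec A B -> lec B C -> lec A C.
Proof.
  intros [f hf] [g hg]. exists (fun a => g (f a)). intros a b e. auto.
Qed.

Definition tn (a b : nat) := to_nat (a, b).
Lemma tn_inj a b c d : tn a b = tn c d -> a = c /\ b = d.
Proof. intro h. unfold tn in h. assert (h2 := f_equal of_nat h). rewrite !cancel_of_to in h2.
  injection h2; auto. Qed.
Global Opaque tn.

Theorem mainTheorem2 (X : Type) (T : topology X) (x0 : X) :
  hausdorff T -> baire T -> developable T ->
  (collectionwise_hausdorff T \/ meta_lindelof T) ->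
  dis_ge_Delta T.
Proof.
  intros hH hB [G hG] hSep I D hD hcov.
  assert (hS : forall Dc, closed T Dc -> discrete_subspace T Dc -> sep_prop X T Dc).
  { intros Dc h1 h2. destruct hSep as [h|h]. apply sep_cwh; auto. apply sep_ml; auto. }
  destruct (main_inj X T x0 hH hB G hG hS I D hD hcov) as [B [hBo [hBne hBJ]]].
  destruct (card_comp I nat) as [[f hf]|[e he]].
  - assert (hJ : lec (J I) nat).
    { exists (fun q => match q with (((i, n), j), k) => tn (tn (tn (f i) n) (f j)) k end).
      intros [[[i n] j] k] [[[i' n'] j'] k'] h.
      apply tn_inj in h. destruct h as [h1 h2]. apply tn_inj in h1.
      destruct h1 as [h3 h4]. apply tn_inj in h3. destruct h3 as [h5 h6].
      apply hf in h5. apply hf in h4. subst; reflexivity. }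
    destruct (lec_trans _ _ _ hBJ hJ) as [c hc].
    destruct (isolated_point X T B c hH hB hBo hBne hc) as [p hp].
    exists (fun x => x = p). split; auto. split. exists p; reflexivity.
    destruct (hcov p) as [i _]. exists (fun _ => i).
    intros [a ha] [b hb] _. subst a. subst b. reflexivity.
  - destruct (hessenberg I e he) as [m hm].
    assert (hJ : lec (J I) I).
    { exists (fun q => match q with (((i, n), j), k) => m (m (m (i, e n), j), e k) end).
      intros [[[i n] j] k] [[[i' n'] j'] k'] h.
      apply hm in h. injection h as h1 h2. apply hm in h1.
      injection h1 as h3 h4. apply hm in h3. injection h3 as h5 h6.
      apply he in h2. apply he in h6. subst; reflexivity. }
    exists B. split; auto. split; auto. exact (lec_trans _ _ _ hBJ hJ).
Qed.
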